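(* Let $q$ be an indeterminate, $k\ge1$, $n\ge2$, and work in $H_{kn}(q)$ over $\mathbb{C}(q)$. For $i\in\{1,\dots,n-1\}$ let $w_i\in\mathfrak S_{kn}$ be the involution exchanging the blocks $\{(i-1)k+1,\dots,ik\}$ and $\{ik+1,\dots,(i+1)k\}$ preserving order ($w_i(j)=j+k$ for $(i-1)k<j\le ik$, $w_i(j)=j-k$ for $ik<j\le(i+1)k$, $w_i(j)=j$ otherwise), and let $\Sigma_i=P_{k,n}\sigma_{w_i}P_{k,n}\in H^{fus}_{k,n}(q)=P_{k,n}H_{kn}(q)P_{k,n}$. Then $\sigma_{w_i}$ commutes with $P_{k,n}$, and in $H^{fus}_{k,n}(q)$ one has $\Sigma_i\Sigma_{i+1}\Sigma_i=\Sigma_{i+1}\Sigma_i\Sigma_{i+1}$ for $1\le i\le n-2$ and $\Sigma_i\Sigma_j=\Sigma_j\Sigma_i$ for $|i-j|>1$.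
   Context: $H_m(q)$ is the algebra generated by $\sigma_1,\dots,\sigma_{m-1}$ with relations $\sigma_i\sigma_{i+1}\sigma_i=\sigma_{i+1}\sigma_i\sigma_{i+1}$, $\sigma_i\sigma_j=\sigma_j\sigma_i$ for $|i-j|>1$, $\sigma_i^2=1+(q-q^{-1})\sigma_i$. For $w\in\mathfrak S_m$ with reduced expression $s_{a_1}\cdots s_{a_r}$, $\sigma_w=\sigma_{a_1}\cdots\sigma_{a_r}$ and $\ell(w)=r$. The $q$-symmetriser of $H_k(q)$ is $P_k=\frac{q^{-k(k-1)/2}}{[k]_q!}\sum_{w\in\mathfrak S_k}q^{\ell(w)}\sigma_w$, with $[L]_q=\frac{q^L-q^{-L}}{q-q^{-1}}$, $[L]_q!=[1]_q\cdots[L]_q$. $P_{k,n}\in H_{kn}(q)$ is the product over $b=0,\dots,n-1$ of the copies of $P_k$ in the generators $\sigma_{bk+1},\dots,\sigma_{bk+k-1}$. The fused Hecke algebra $H^{fus}_{k,n}(q)=P_{k,n}H_{kn}(q)P_{k,n}$ is an algebra with unit $P_{k,n}$. *)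

(* Defs.v *)
From HB Require Import structures.
From mathcomp Require Import all_boot all_order all_algebra all_fingroup.
From mathcomp Require Import reals.
From mathcomp.real_closed Require Import complex.
From mathcomp Require Import zify.

Set Implicit Arguments.
Unset Strict Implicit.
Unset Printing Implicit Defensive.

Import GRing.Theory.

Definition Cq (R : realType) : fieldType := {fraction {poly (complex R)}}.
Definition qq (R : realType) : Cq R := tofrac ('X : {poly (complex R)}).

Local Open Scope ring_scope.

Definition qint (K : fieldType) (q : K) (L : nat) : K :=
  (q ^+ L - q ^- L) / (q - q^-1).
Definition qfact (K : fieldType) (q : K) (L : nat) : K :=
  \prod_(1 <= j < L.+1) qint q j.

(* The simple transposition s_a of S_m (1-based: exchanges a and a+1,
   i.e. the 0-based points a-1 and a), for 1 <= a <= m-1; identity otherwise *)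
Definition stp (m a : nat) : {perm 'I_m} :=
  match m return {perm 'I_m} with
  | 0 => 1%g
  | m'.+1 => if ((0 < a) && (a < m'.+1))%N
             then tperm (inord a.-1 : 'I_m'.+1) (inord a) else 1%g
  end.

Definition word_perm (m : nat) (s : seq nat) : {perm 'I_m} :=
  (\prod_(a <- s) stp m a)%g.

(* letters of words are the indices 1..m-1, encoded by 'I_m.-1 via i |-> i+1 *)
Definition letter (m : nat) (i : 'I_m.-1) : nat := i.+1.

(* length l(w) = minimal length of an expression of w in the s_a *)
Definition ell (m : nat) (w : {perm 'I_m}) : nat :=
  find (fun r => [exists t : r.-tuple 'I_m.-1,
                    word_perm m (map (@letter m) t) == w])
       (iota 0 (m * m).+1).

(* sigma_w = sigma_{a_1} ... sigma_{a_r} for a reduced expression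
   w = s_{a_1} ... s_{a_r}, r = l(w); s a = sigma_a *)
Definition sigw (K : fieldType) (A : algType K) (s : nat -> A) (m : nat)
    (w : {perm 'I_m}) : A :=
  match [pick t : (ell w).-tuple 'I_m.-1 | word_perm m (map (@letter m) t) == w] with
  | Some t => \prod_(i <- t) s (@letter m i)
  | None => 0
  end.

Definition hecke_rel (K : fieldType) (q : K) (A : algType K) (m : nat)
    (s : nat -> A) : Prop :=
  [/\ (forall i, (1 <= i)%N -> (i.+1 <= m.-1)%N ->
         s i * s i.+1 * s i = s i.+1 * s i * s i.+1),
      (forall i j, (1 <= i <= m.-1)%N -> (1 <= j <= m.-1)%N ->
         (i.+1 < j)%N || (j.+1 < i)%N -> s i * s j = s j * s i)
    & (forall i, (1 <= i <= m.-1)%N -> s i * s i = 1 + (q - q^-1) *: s i)].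

Definition qsym (K : fieldType) (q : K) (A : algType K) (s : nat -> A)
    (k : nat) : A :=
  (q ^- (k * k.-1)./2 / qfact q k) *:
    \sum_(w : {perm 'I_k}) (q ^+ ell w) *: sigw s w.

(* P_{k,n}: product over b = 0..n-1 of the copies of P_k in the generators
   sigma_{bk+1}, ..., sigma_{bk+k-1} *)
Definition Pkn (K : fieldType) (q : K) (A : algType K) (s : nat -> A)
    (k n : nat) : A :=
  \prod_(b < n) qsym q (fun a => s (b * k + a)%N) k.

(* block exchange on 0-based points: w_i(j) = j + k for (i-1)k <= j < ik,
   w_i(j) = j - k for ik <= j < (i+1)k, w_i(j) = j otherwise *)
Definition blk (k i j : nat) : nat :=
  if ((i.-1 * k <= j) && (j < i * k))%N then (j + k)%N
  else if ((i * k <= j) && (j < i.+1 * k))%N then (j - k)%N else j.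

Definition wfun (m k i : nat) (j : 'I_m) : 'I_m :=
  if ((0 < i) && (i.+1 * k <= m))%N then insubd j (blk k i j) else j.

Lemma wfun_inj m k i : injective (@wfun m k i).
Proof.
move=> j1 j2; rewrite /wfun; case: ifP => // /andP [Hi Hm].
have Hr : forall j : 'I_m, (blk k i j < m)%N.
  move=> j; have := ltn_ord j; rewrite /blk.
  case: i Hi Hm => // i' _ Hm /=.
  by do ! case: ifP => /= ?; nia.
move/(congr1 val); rewrite !val_insubd !Hr => E; apply/val_inj => /=.
move: E; rewrite /blk; case: i Hi Hm Hr => // i' _ Hm _ /=.
by do ! case: ifP => /= ?; nia.
Qed.

Definition wblk (m k i : nat) : {perm 'I_m} := perm (@wfun_inj m k i).

(* Main.v *)
Require Import Defs.
From HB Require Import structures.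
From mathcomp Require Import all_boot all_order all_algebra all_fingroup.
From mathcomp Require Import reals.
From mathcomp.real_closed Require Import complex.
From mathcomp Require Import zify.
Set Implicit Arguments.
Unset Strict Implicit.
Unset Printing Implicit Defensive.
Import GRing.Theory.

Ltac iflia := repeat match goal with
  | |- context [if ?b then _ else _] =>
      lazymatch b with context [if _ then _ else _] => fail | _ =>
        let h := fresh "h" in case: (boolP b) => h end
  | H : context [if ?b then _ else _] |- _ =>
      lazymatch b with context [if _ then _ else _] => fail | _ =>
        let h := fresh "h" in case: (boolP b) => h; rewrite ?h in H end
  end; simpl in *; try lia.

Section Perms.
Variable m : nat.

Lemma stpE (c : nat) (x : 'I_m) : (0 < c < m)%N ->
  val (stp m c x) = if val x == c.-1 then c else if val x == c then c.-1 else val x.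
Proof.
case: m x => [[]//|m'] x /andP[c0 cm]; rewrite /stp c0 cm /=.
case: tpermP => [->|->|h1 h2]; rewrite ?inordK; try lia.
- by rewrite eqxx.
- by case: ifP => /eqP h //; rewrite eqxx.
- have e1 : (val x == c.-1) = false.
    by apply/negP => /eqP e; apply: h1; apply/val_inj; rewrite /= inordK //; lia.
  have e2 : (val x == c) = false.
    by apply/negP => /eqP e; apply: h2; apply/val_inj; rewrite /= inordK //; lia.
  by rewrite e1 e2.
Qed.

Definition inv (w : {perm 'I_m}) : nat :=
  \sum_(x : 'I_m) \sum_(y : 'I_m) ((x < y) && (w y < w x))%N.

Lemma sum_pairs (F : 'I_m -> 'I_m -> nat) :
  \sum_(x : 'I_m) \sum_(y : 'I_m) F x y =
  \sum_(x : 'I_m) \sum_(y : 'I_m) ((x < y) * (F x y + F y x))%N + \sum_(x : 'I_m) F x x.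
Proof.
have E : forall x y : 'I_m, F x y = ((x < y) * F x y + (y < x) * F x y + (x == y) * F x y)%N.
  move=> x y; case: (x =P y) => [->|ne]; first by rewrite ltnn /= mul1n.
  rewrite /= mul0n addn0; case: (ltngtP x y) => h /=; rewrite ?mul1n ?mul0n ?addn0 //.
  by case: ne; apply/val_inj.
transitivity (\sum_(x : 'I_m) \sum_(y : 'I_m) ((x < y) * F x y + (y < x) * F x y + (x == y) * F x y)%N).
  by apply: eq_bigr => x _; apply: eq_bigr => y _; rewrite -E.
have D : forall x : 'I_m, \sum_(y : 'I_m) ((x == y) * F x y)%N = F x x.
  move=> x; rewrite (bigD1 x) //= eqxx mul1n big1 ?addn0 // => y.
  by rewrite eq_sym => /negbTE ->.
under eq_bigr => x _ do rewrite !big_split /= D.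
rewrite !big_split /=; congr (_ + _).
rewrite (exchange_big _ _ _ _ _ (fun (x y : 'I_m) => (y < x) * F x y)%N) /= -big_split /=.
by apply: eq_bigr => x _; rewrite -big_split /=; apply: eq_bigr => y _; rewrite mulnDr.
Qed.

Lemma inv_mul (u v : {perm 'I_m}) :
  (forall x y : 'I_m, x < y -> u y < u x -> v (u y) < v (u x)) ->
  inv (u * v)%g = (inv u + inv v)%N.
Proof.
move=> crit.
have Hv : inv v = \sum_(x : 'I_m) \sum_(y : 'I_m) ((u x < u y) && (v (u y) < v (u x)))%N.
  rewrite /inv (reindex_inj (@perm_inj _ u)) /=; apply: eq_bigr => x _.
  by rewrite (reindex_inj (@perm_inj _ u)).
rewrite Hv sum_pairs.
have -> : \sum_(x : 'I_m) ((u x < u x) && (v (u x) < v (u x)))%N = 0%N.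
  by apply: big1 => x _; rewrite ltnn.
rewrite addn0.
rewrite /inv -big_split /=; apply: eq_bigr => x _; rewrite -big_split /=.
apply: eq_bigr => y _; rewrite !permM.
case: (ltnP x y) => hxy /=; last by rewrite mul0n.
rewrite mul1n; case: (ltngtP (u x) (u y)) => h /=.
- by rewrite add0n addn0.
- have := crit x y hxy h => c; rewrite c add0n /=.
  by rewrite ltnNge ltnW.
- by move: h => /val_inj /perm_inj e; rewrite e ltnn in hxy.
Qed.



Lemma stp_val_eq c (x y : 'I_m) : (0 < c < m)%N -> val x = c.-1 -> val y = c ->
  stp m c x = y /\ stp m c y = x.
Proof.
move=> hc hx hy; split; apply/val_inj; rewrite stpE //= hx hy; iflia.
Qed.

Lemma stpK c : (0 < c < m)%N -> (stp m c * stp m c = 1)%g.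
Proof. move=> hc; apply/permP => x; apply/val_inj; rewrite permM perm1 !stpE //; iflia. Qed.

Lemma stp_comm a b : (0 < a < m)%N -> (0 < b < m)%N -> (a.+1 < b)%N || (b.+1 < a)%N ->
  (stp m a * stp m b = stp m b * stp m a)%g.
Proof. move=> ha hb hab; apply/permP => x; apply/val_inj; rewrite !permM !stpE //; iflia. Qed.

Lemma stp_braid a : (0 < a)%N -> (a.+1 < m)%N ->
  (stp m a * stp m a.+1 * stp m a = stp m a.+1 * stp m a * stp m a.+1)%g.
Proof.
move=> h1 h2; apply/permP => x; apply/val_inj; rewrite !permM !stpE //; try lia; iflia.
Qed.

Lemma inv_stp c : (0 < c < m)%N -> inv (stp m c) = 1%N.
Proof.
move=> hc.
have P : forall x y : 'I_m, ((x < y) && (stp m c y < stp m c x))%N =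
     ((val x == c.-1) && (val y == c)).
  move=> x y; rewrite !stpE //; apply/idP/idP; iflia.
have c1 : (c.-1 < m)%N by lia.
have c2 : (c < m)%N by lia.
rewrite /inv; under eq_bigr => x _ do under eq_bigr => y _ do rewrite P.
have S1 : forall (F : 'I_m -> nat) (z : 'I_m), (forall x, x != z -> F x = 0%N) ->
    \sum_(x : 'I_m) F x = F z.
  by move=> F z h; rewrite (bigD1 z) //= big1 ?addn0 // => x /h.
rewrite (S1 _ (Ordinal c1)) /=.
  rewrite (S1 _ (Ordinal c2)) /= ?eqxx //.
  move=> y /eqP ne; case: eqP => [e|]; last by rewrite andbF.
  by case: ne; apply: val_inj.
move=> x /eqP ne; apply: big1 => y _; case: eqP => //= e; case: ne; exact: val_inj.
Qed.

Lemma inv_stp_mul c (u : {perm 'I_m}) (x0 y0 : 'I_m) : (0 < c < m)%N ->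
  val x0 = c.-1 -> val y0 = c -> (u x0 < u y0)%N -> inv (stp m c * u)%g = (inv u).+1.
Proof.
move=> hc hx hy hu; rewrite inv_mul ?inv_stp // => x y hxy hs.
have : ((x < y) && (stp m c y < stp m c x))%N by rewrite hxy hs.
rewrite !stpE //; move=> h.
have ex : x = x0 by apply/val_inj; rewrite hx; move: h; iflia.
have ey : y = y0 by apply/val_inj; rewrite hy; move: h; iflia.
by rewrite ex ey; case: (stp_val_eq hc hx hy) => -> ->.
Qed.

Lemma inv_stp_mul' c (u : {perm 'I_m}) (x0 y0 : 'I_m) : (0 < c < m)%N ->
  val x0 = c.-1 -> val y0 = c -> (u y0 < u x0)%N -> inv u = (inv (stp m c * u)%g).+1.
Proof.
move=> hc hx hy hu.
have E : u = (stp m c * (stp m c * u))%g by rewrite mulgA stpK // mul1g.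
rewrite {1}E (@inv_stp_mul c _ x0 y0) //.
by rewrite !permM; case: (stp_val_eq hc hx hy) => -> ->.
Qed.

Lemma term_le_inv (w : {perm 'I_m}) (x y : 'I_m) :
  (((x < y) && (w y < w x)) <= inv w)%N.
Proof.
rewrite /inv (bigD1 x) //= (bigD1 y) //=.
by rewrite -addnA leq_addr.
Qed.

Lemma perm_incr_id (w : {perm 'I_m}) :
  (forall x y : 'I_m, val y = (val x).+1 -> (w x < w y)%N) -> w = 1%g.
Proof.
move=> inc.
have up : forall i (x : 'I_m), val x = i -> (i <= w x)%N.
  elim=> [|i IH] x hx //.
  have hi : (i < m)%N by have := ltn_ord x; simpl in *; lia.
  have := IH (Ordinal hi) erefl; have := inc (Ordinal hi) x hx; simpl; simpl in *; lia.
have down : forall d (x : 'I_m), (val x + d = m.-1)%N -> (w x + d <= m.-1)%N.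
  elim=> [|d IH] x hx; first by have := ltn_ord (w x); simpl in *; lia.
  have hi : ((val x).+1 < m)%N by have := ltn_ord x; simpl in *; lia.
  have := IH (Ordinal hi) ltac:(simpl; simpl in *; lia); have := inc x (Ordinal hi) erefl; simpl; simpl in *; lia.
apply/permP => x; apply/val_inj; rewrite perm1.
have := up _ x erefl; have := down (m.-1 - x) x ltac:(have := ltn_ord x; simpl in *; lia); simpl in *; lia.
Qed.

Lemma descent_exists (w : {perm 'I_m}) : w != 1%g ->
  exists c (x0 y0 : 'I_m), [/\ (0 < c < m)%N, val x0 = c.-1, val y0 = c & (w y0 < w x0)%N].
Proof.
move=> ne.
case: (boolP [exists x : 'I_m, exists y : 'I_m, (val y == (val x).+1) && (w y < w x)%N]).
  move=> /existsP [x /existsP [y /andP [/eqP e h]]].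
  exists (val y), x, y; split => //; last by rewrite e.
  by rewrite e /=; have := ltn_ord y; rewrite e; simpl in *; lia.
move=> /negP nex; case/negP: ne; apply/eqP/perm_incr_id => x y e.
case: (ltngtP (w x) (w y)) => // h.
  by case: nex; apply/existsP; exists x; apply/existsP; exists y; rewrite e eqxx h.
by move/val_inj/perm_inj: h => exy; move: e; rewrite exy; simpl in *; lia.
Qed.

Lemma inv1 : inv 1%g = 0%N.
Proof. by apply: big1 => x _; apply: big1 => y _; rewrite !perm1; case: ltnP => //= h; rewrite ltnNge ltnW. Qed.

Lemma word_perm_cons a t : word_perm m (a :: t) = (stp m a * word_perm m t)%g.
Proof. by rewrite /word_perm big_cons. Qed.

Lemma word_perm_cat t1 t2 : word_perm m (t1 ++ t2) = (word_perm m t1 * word_perm m t2)%g.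
Proof. by rewrite /word_perm big_cat. Qed.

Definition okw (t : seq nat) := all (fun a => (0 < a < m)%N) t.

Lemma inv_stp_le c (u : {perm 'I_m}) : (0 < c < m)%N -> (inv (stp m c * u)%g <= (inv u).+1)%N.
Proof.
move=> hc.
have c1 : (c.-1 < m)%N by lia.
have c2 : (c < m)%N by lia.
case: (ltngtP (u (Ordinal c1)) (u (Ordinal c2))) => h.
- by rewrite (@inv_stp_mul c _ (Ordinal c1) (Ordinal c2)).
- by rewrite [X in (_ <= X.+1)%N](@inv_stp_mul' c _ (Ordinal c1) (Ordinal c2)) //; simpl in *; lia.
- move/val_inj/perm_inj: h => h; have : val (Ordinal c1) = val (Ordinal c2) by rewrite h.
  simpl; simpl in *; lia.
Qed.

Lemma inv_wp_le t : okw t -> (inv (word_perm m t) <= size t)%N.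
Proof.
elim: t => [|a t IH] /=; first by rewrite /word_perm big_nil inv1.
move=> /andP [ha ht]; rewrite word_perm_cons.
by apply: leq_trans (inv_stp_le _ ha) _; rewrite ltnS IH.
Qed.

Lemma okw_letters r (t : r.-tuple 'I_m.-1) : okw (map (@letter m) t).
Proof.
apply/allP => a /mapP [i _ ->]; rewrite /letter /=; have := ltn_ord i; simpl in *; lia.
Qed.

Lemma inv_word_exists_r r (w : {perm 'I_m}) : inv w = r ->
  exists t : r.-tuple 'I_m.-1, word_perm m (map (@letter m) t) = w.
Proof.
elim: r w => [|r IH] w hw.
  exists [tuple]; rewrite /word_perm big_nil.
  case: (eqVneq w 1%g) => [->//|ne]; case: (descent_exists ne) => c [x0 [y0 [hc hx hy hd]]].
  by have := inv_stp_mul' hc hx hy hd; rewrite hw.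
case: (eqVneq w 1%g) => [e|ne]; first by move: hw; rewrite e inv1.
case: (descent_exists ne) => c [x0 [y0 [hc hx hy hd]]].
have := inv_stp_mul' hc hx hy hd; rewrite hw => [[] e].
case: (IH _ (esym e)) => t ht.
have hi : (c.-1 < m.-1)%N by lia.
exists (cons_tuple (Ordinal hi) t) => /=.
rewrite word_perm_cons ht /letter /= prednK; last by lia.
by rewrite mulgA stpK // mul1g.
Qed.

Lemma inv_word_exists (w : {perm 'I_m}) :
  exists t : (inv w).-tuple 'I_m.-1, word_perm m (map (@letter m) t) = w.
Proof. exact: inv_word_exists_r. Qed.

Lemma inv_le_mm (w : {perm 'I_m}) : (inv w < (m * m).+1)%N.
Proof.
rewrite ltnS /inv.
apply: (@leq_trans (\sum_(x : 'I_m) \sum_(y : 'I_m) 1%N)).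
  by apply: leq_sum => x _; apply: leq_sum => y _; case: (_ && _).
by rewrite big_const_ord iter_addn_0 big_const_ord iter_addn_0 mul1n.
Qed.

Lemma ellE (w : {perm 'I_m}) : ell w = inv w.
Proof.
set p := (fun r => [exists t : r.-tuple 'I_m.-1, word_perm m (map (@letter m) t) == w]).
have pinv : p (inv w).
  by case: (inv_word_exists w) => t ht; apply/existsP; exists t; apply/eqP.
have pge : forall r, p r -> (inv w <= r)%N.
  move=> r /existsP [t /eqP ht]; rewrite -ht.
  by apply: leq_trans (inv_wp_le (okw_letters t)) _; rewrite size_map size_tuple.
have hin : inv w \in iota 0 (m * m).+1 by rewrite mem_iota /= inv_le_mm.
have has_p : has p (iota 0 (m * m).+1) by apply/hasP; exists (inv w).
rewrite /ell -/p.
have hf : (find p (iota 0 (m * m).+1) < (m * m).+1)%N by move: has_p; rewrite has_find size_iota.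
apply/eqP; rewrite eqn_leq; apply/andP; split.
  case: ltnP => // h; have := before_find 0 h; rewrite nth_iota ?add0n.
    by rewrite pinv.
  by have := inv_le_mm w; simpl in *; lia.
have := nth_find 0 has_p; rewrite nth_iota ?add0n //; exact: pge.
Qed.

Lemma red_exists (w : {perm 'I_m}) :
  exists t, [/\ okw t, size t = inv w & word_perm m t = w].
Proof.
case: (inv_word_exists w) => t ht; exists (map (@letter m) t); split => //.
  exact: okw_letters.
by rewrite size_map size_tuple.
Qed.

Lemma red_cons a u : okw (a :: u) -> size (a :: u) = inv (word_perm m (a :: u)) ->
  size u = inv (word_perm m u) /\
  forall x0 y0 : 'I_m, val x0 = a.-1 -> val y0 = a ->
    (word_perm m (a :: u) y0 < word_perm m (a :: u) x0)%N.
Proof.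
move=> /= /andP [ha hu] hs.
have hle := inv_wp_le hu.
have hs' := hs; rewrite word_perm_cons in hs'.
have := inv_stp_le (word_perm m u) ha; rewrite -hs' /= => h1.
have e : size u = inv (word_perm m u) by simpl in *; lia.
split => // x0 y0 hx hy.
case: (ltngtP (word_perm m (a :: u) x0) (word_perm m (a :: u) y0)) => // h.
- have := inv_stp_mul ha hx hy h; rewrite word_perm_cons mulgA stpK // mul1g.
  by rewrite -word_perm_cons -hs -e /=; lia.
- by move/val_inj/perm_inj: h => h; move: hx hy; rewrite h => -> /=; simpl in *; lia.
Qed.

End Perms.

Section Matsumoto.
Variables (K : fieldType) (A : algType K) (m : nat) (s : nat -> A).
Local Open Scope ring_scope.
Hypothesis Hb : forall i, (0 < i)%N -> (i.+1 < m)%N -> s i * s i.+1 * s i = s i.+1 * s i * s i.+1.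
Hypothesis Hc : forall i j, (0 < i < m)%N -> (0 < j < m)%N -> (i.+1 < j)%N || (j.+1 < i)%N ->
   s i * s j = s j * s i.

Definition prodw (t : seq nat) : A := \prod_(a <- t) s a.

Lemma prodw_cons a t : prodw (a :: t) = s a * prodw t.
Proof. by rewrite /prodw big_cons. Qed.

Lemma matsumoto r : forall t1 t2, size t1 = r -> okw m t1 -> okw m t2 ->
  size t1 = inv (word_perm m t1) -> size t2 = inv (word_perm m t2) ->
  word_perm m t1 = word_perm m t2 -> prodw t1 = prodw t2.
Proof.
elim: r => [|r IH] t1 t2 hs1 ok1 ok2 r1 r2 e.
  have : size t2 = 0%N by rewrite r2 -e -r1 hs1.
  by case: t1 hs1 {r1 ok1 e} => // _; case: t2 {r2 ok2} => //.
have key : forall a b u1 u2, (a < b)%N -> size u1 = r -> okw m (a :: u1) -> okw m (b :: u2) ->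
    size (a :: u1) = inv (word_perm m (a :: u1)) -> size (b :: u2) = inv (word_perm m (b :: u2)) ->
    word_perm m (a :: u1) = word_perm m (b :: u2) -> s a * prodw u1 = s b * prodw u2.
  move=> a b u1 u2 ab hsu1 oka okb ra rb eab.
  move: (oka) (okb) => /= /andP[ha oku1] /andP[hb oku2].
  have [ru1 da] := red_cons oka ra; have [ru2 db] := red_cons okb rb.
  set w := word_perm m (a :: u1) in eab da ra.
  rewrite -eab in db.
  have wu1 : word_perm m u1 = (stp m a * w)%g by rewrite /w word_perm_cons mulgA stpK // mul1g.
  have wu2 : word_perm m u2 = (stp m b * w)%g by rewrite eab word_perm_cons mulgA stpK // mul1g.
  have hs2 : size u2 = r by move: ra rb; rewrite eab /= hsu1; lia.
  have p0m : (a.-1 < m)%N by simpl in *; lia.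
  have p1m : (a < m)%N by simpl in *; lia.
  have q0m : (b.-1 < m)%N by simpl in *; lia.
  have q1m : (b < m)%N by simpl in *; lia.
  have da' := da (Ordinal p0m) (Ordinal p1m) erefl erefl.
  have db' := db (Ordinal q0m) (Ordinal q1m) erefl erefl.
  have iz1 : inv (stp m a * w)%g = r by rewrite -wu1 -ru1.
  have iz2 : inv (stp m b * w)%g = r by rewrite -wu2 -ru2.
  case: (ltnP a.+1 b) => far.
  -
    have d1 : ((stp m a * w)%g (Ordinal q1m) < (stp m a * w)%g (Ordinal q0m))%N.
      rewrite !permM.
      have -> : stp m a (Ordinal q1m) = Ordinal q1m by apply/val_inj; rewrite stpE //=; iflia.
      have -> : stp m a (Ordinal q0m) = Ordinal q0m by apply/val_inj; rewrite stpE //=; iflia.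
      exact: db'.
    have iy := inv_stp_mul' hb (erefl : val (Ordinal q0m) = b.-1) (erefl : val (Ordinal q1m) = b) d1.
    set y := (stp m b * (stp m a * w))%g in iy.
    case: (red_exists y) => ty [okty sty wty].
    have c1 : prodw u1 = prodw (b :: ty).
      apply: IH => //=; first by rewrite ?oku1 ?hb ?okty.
        by rewrite word_perm_cons wty /y mulgA stpK // mul1g iy sty.
      by rewrite wu1 word_perm_cons wty /y mulgA stpK // mul1g.
    have c2 : prodw u2 = prodw (a :: ty).
      apply: IH => //=; first by rewrite ?oku2 ?ha ?okty.
        rewrite word_perm_cons wty /y mulgA (stp_comm ha hb) ?far ?orbT //.
        by rewrite -mulgA [X in (_ * X)%g]mulgA stpK // mul1g iz2 -iz1 iy sty.
      rewrite wu2 word_perm_cons wty /y mulgA (stp_comm ha hb) ?far ?orbT //.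
      by rewrite -!mulgA (mulgA (stp m a)) stpK // mul1g.
    rewrite c1 c2 !prodw_cons !mulrA Hc //; by rewrite ?ha ?hb ?far.
  -
    have eb : b = a.+1 by lia.
    subst b.
    have db2 : (w (Ordinal q1m) < w (Ordinal p1m))%N := db (Ordinal p1m) (Ordinal q1m) erefl erefl.
    have d1 : ((stp m a * w)%g (Ordinal q1m) < (stp m a * w)%g (Ordinal p1m))%N.
      rewrite !permM.
      have -> : stp m a (Ordinal q1m) = Ordinal q1m by apply/val_inj; rewrite stpE //=; iflia.
      have -> : stp m a (Ordinal p1m) = Ordinal p0m by apply/val_inj; rewrite stpE //=; iflia.
      exact: ltn_trans db2 da'.
    have i1 := inv_stp_mul' hb (erefl : val (Ordinal p1m) = a.+1.-1) (erefl : val (Ordinal q1m) = a.+1) d1.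
    set z2 := (stp m a.+1 * (stp m a * w))%g in i1.
    have d2 : (z2 (Ordinal p1m) < z2 (Ordinal p0m))%N.
      rewrite /z2 !permM.
      have -> : stp m a.+1 (Ordinal p1m) = Ordinal q1m by apply/val_inj; rewrite stpE //=; iflia.
      have -> : stp m a (Ordinal q1m) = Ordinal q1m by apply/val_inj; rewrite stpE //=; iflia.
      have -> : stp m a.+1 (Ordinal p0m) = Ordinal p0m by apply/val_inj; rewrite stpE //=; iflia.
      have -> : stp m a (Ordinal p0m) = Ordinal p1m by apply/val_inj; rewrite stpE //=; iflia.
      exact: db2.
    have i2 := inv_stp_mul' ha (erefl : val (Ordinal p0m) = a.-1) (erefl : val (Ordinal p1m) = a) d2.
    set y := (stp m a * z2)%g in i2.
    case: (red_exists y) => ty [okty sty wty].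
    have okA : okw m (a.+1 :: a :: ty) by rewrite /= okty andbT; apply/andP; split; simpl in *; lia.
    have okB : okw m (a :: a.+1 :: ty) by rewrite /= okty andbT; apply/andP; split; simpl in *; lia.
    have c1 : prodw u1 = prodw (a.+1 :: a :: ty).
      apply: IH => //.
        by rewrite !word_perm_cons wty /y /z2 (mulgA (stp m a)) stpK // mul1g mulgA stpK // mul1g /= i1 i2 sty.
      by rewrite wu1 !word_perm_cons wty /y /z2 (mulgA (stp m a)) stpK // mul1g mulgA stpK // mul1g.
    have c2 : prodw u2 = prodw (a :: a.+1 :: ty).
      apply: IH => //.
        rewrite !word_perm_cons wty /y /z2 !mulgA stp_braid //; try (simpl in *; lia).
        rewrite -(mulgA _ (stp m a.+1) (stp m a.+1)) stpK // mulg1 -(mulgA _ (stp m a) (stp m a)) stpK // mulg1.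
        by rewrite /= iz2 -iz1 i1 i2 sty.
      rewrite wu2 !word_perm_cons wty /y /z2 !mulgA stp_braid //; try (simpl in *; lia).
      by rewrite -(mulgA _ (stp m a.+1) (stp m a.+1)) stpK // mulg1 -(mulgA _ (stp m a) (stp m a)) stpK // mulg1.
    rewrite c1 c2 !prodw_cons !mulrA Hb //; simpl in *; lia.
case: t1 hs1 ok1 r1 e => // a u1 [hs1] ok1 r1 e.
case: t2 ok2 r2 e => [|b u2] ok2 r2 e.
  by move: r1; rewrite e /word_perm big_nil inv1.
have hs2 : size u2 = r by move: r1 r2; rewrite e /= hs1; lia.
rewrite !prodw_cons; case: (ltngtP a b) => h.
- exact: key.
- by apply: esym; apply: key.
- subst b; congr (_ * _); apply: IH => //.
  + by case/andP: ok1.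
  + by case/andP: ok2.
  + by case: (red_cons ok1 r1).
  + by case: (red_cons ok2 r2).
  + move: e; rewrite !word_perm_cons => e.
    by rewrite -(mul1g (word_perm m u1)) -(stpK (m:=m) (c:=a)); [rewrite -mulgA e mulgA stpK ?mul1g | ]; case/andP: ok1.
Qed.

Lemma sigwE (w : {perm 'I_m}) t : okw m t -> size t = inv w -> word_perm m t = w ->
  sigw s w = prodw t.
Proof.
move=> okt st wt; rewrite /sigw; case: pickP => [t' /eqP ht' | none].
  rewrite -(big_map (@letter m) xpredT s) -/(prodw _).
  apply: (@matsumoto (size (map (@letter m) t'))) => //.
  - exact: okw_letters.
  - by rewrite size_map size_tuple ht' ellE.
  - by rewrite st wt.
  - by rewrite ht' wt.
exfalso; case: (inv_word_exists w) => t0 ht0.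
move: none; rewrite ellE => none.
by have := none t0; rewrite ht0 eqxx.
Qed.

Lemma sigw_mul (u v : {perm 'I_m}) : inv (u * v)%g = (inv u + inv v)%N ->
  sigw s (u * v)%g = sigw s u * sigw s v.
Proof.
move=> h.
case: (red_exists u) => tu [oku su wu]; case: (red_exists v) => tv [okv sv wv].
rewrite (sigwE oku su wu) (sigwE okv sv wv) (@sigwE (u * v)%g (tu ++ tv)).
- by rewrite /prodw big_cat.
- by move: oku okv; rewrite /okw all_cat => -> ->.
- by rewrite size_cat su sv h.
- by rewrite word_perm_cat wu wv.
Qed.

Lemma sigw_stp c : (0 < c < m)%N -> sigw s (stp m c) = s c.
Proof.
move=> hc; rewrite (@sigwE _ [:: c]) /=.
- by rewrite prodw_cons /prodw big_nil mulr1.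
- by rewrite /okw /= hc.
- by rewrite inv_stp.
- by rewrite word_perm_cons /word_perm big_nil mulg1.
Qed.

End Matsumoto.


Lemma blk_lin k i z j : (0 < i)%N -> (i.-1 * k = z)%N ->
  blk k i j = if ((z <= j) && (j < z + k))%N then (j + k)%N
              else if ((z + k <= j) && (j < z + k + k))%N then (j - k)%N else j.
Proof.
case: i => // i _ /= hz; rewrite /blk /= hz.
rewrite !mulSn -hz; have -> : (k + (k + i*k) = i*k + k + k)%N by lia.
by have -> : (k + i*k = i*k + k)%N by lia.
Qed.

Lemma wblkE m k i (x : 'I_m) : (0 < i)%N -> (i.+1 * k <= m)%N -> val (wblk m k i x) = blk k i x.
Proof.
move=> hi hm; rewrite /wblk permE /wfun hi hm /= val_insubd.
have := ltn_ord x; case: i hi hm => // i _ hm hx.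
rewrite (blk_lin _ (i := i.+1) (z := (i * k)%N)) //=; iflia.
Qed.

Ltac iflia2 := repeat match goal with
  | |- context [if ?b then _ else _] =>
      lazymatch b with context [if _ then _ else _] => fail | _ =>
        let h := fresh "h" in case: (boolP b) => h; simpl in h; try (exfalso; lia) end
  end; simpl in *; try lia.

Section Blocks.
Variables m k : nat.
Local Notation W i := (wblk m k i).

Lemma mulpk i : (0 < i)%N -> (i * k = i.-1 * k + k)%N.
Proof. by case: i => // i _; rewrite mulSn addnC. Qed.

Ltac blkr i := rewrite ?(@blk_lin k i (i.-1 * k)) //.

Lemma W_braid i : (0 < i)%N -> (i.+2 * k <= m)%N ->
  (W i * W i.+1 * W i = W i.+1 * W i * W i.+1)%g.
Proof.
move=> hi hm; have hm1 : (i.+1 * k <= m)%N by apply: leq_trans hm; rewrite leq_mul2r ltnW ?orbT.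
apply/permP => x; apply/val_inj; rewrite !permM !wblkE //.
have e1 : (i.+1.-1 * k = i.-1 * k + k)%N by rewrite /= mulpk.
rewrite !(@blk_lin k i.+1 (i.-1 * k + k)) //; blkr i.
have := ltn_ord x; move: hm; rewrite !mulSn mulpk //.
set z := (i.-1 * k)%N; move=> hm hx; iflia.
Qed.
Lemma le_mulk i : (i.+1 * k <= m)%N -> (i * k + k <= m)%N.
Proof. by rewrite mulSn addnC. Qed.

Lemma W_inv_crit1 i : (0 < i)%N -> (i.+2 * k <= m)%N ->
  inv (W i * W i.+1)%g = (inv (W i) + inv (W i.+1))%N /\
  inv (W i * W i.+1 * W i)%g = (inv (W i * W i.+1)%g + inv (W i))%N /\
  inv (W i.+1 * W i)%g = (inv (W i.+1) + inv (W i))%N /\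
  inv (W i.+1 * W i * W i.+1)%g = (inv (W i.+1 * W i)%g + inv (W i.+1))%N.
Proof.
move=> hi hm; have hm1 : (i.+1 * k <= m)%N by apply: leq_trans hm; rewrite leq_mul2r ltnW ?orbT.
have e1 : (i.+1.-1 * k = i.-1 * k + k)%N by rewrite /= mulpk.
have hm' := hm; move: hm'; rewrite !mulSn mulpk //; set z := (i.-1 * k)%N => hm'.
split; [|split; [|split]]; apply: inv_mul => x y hxy; rewrite ?permM !wblkE //;
  rewrite !(@blk_lin k i.+1 (z + k)) //; rewrite ?(@blk_lin k i z) //;
  have := ltn_ord x; have := ltn_ord y; iflia2.
Qed.

Lemma far_z i j : (0 < i)%N -> (0 < j)%N -> (i.+1 < j)%N || (j.+1 < i)%N ->
  (i.-1 * k + k + k <= j.-1 * k)%N || (j.-1 * k + k + k <= i.-1 * k)%N.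
Proof.
move=> hi hj /orP [h|h]; apply/orP; [left|right].
  have := @leq_mul i.-1.+2 k j.-1 k ltac:(lia) (leqnn k); rewrite !mulSn; lia.
have := @leq_mul j.-1.+2 k i.-1 k ltac:(lia) (leqnn k); rewrite !mulSn; lia.
Qed.

Lemma W_far i j : (0 < i)%N -> (0 < j)%N -> (i.+1 * k <= m)%N -> (j.+1 * k <= m)%N ->
  (i.+1 < j)%N || (j.+1 < i)%N ->
  (W i * W j = W j * W i)%g /\ inv (W i * W j)%g = (inv (W i) + inv (W j))%N.
Proof.
move=> hi hj hmi hmj far; have fz := far_z hi hj far.
have := hmi; have := hmj; rewrite !mulSn !(mulpk hi) !(mulpk hj).
set zi := (i.-1 * k)%N; set zj := (j.-1 * k)%N => hmj' hmi'.
split.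
  apply/permP => x; apply/val_inj; rewrite !permM !wblkE //.
  rewrite !(@blk_lin k i zi) // !(@blk_lin k j zj) //.
  have := ltn_ord x; iflia2.
apply: inv_mul => x y hxy; rewrite !wblkE //.
rewrite !(@blk_lin k i zi) // !(@blk_lin k j zj) //.
have := ltn_ord x; have := ltn_ord y; iflia2.
Qed.

Definition sw (i b : nat) := if b == i.-1 then i else if b == i then i.-1 else b.

Lemma sw_far i b : (0 < i)%N -> b != i.-1 -> b != i ->
  (b * k + k <= i.-1 * k)%N || (i.-1 * k + k + k <= b * k)%N.
Proof.
move=> hi n1 n2; case: (ltnP b i.-1) => h; apply/orP; [left|right].
  have := @leq_mul b.+1 k i.-1 k h (leqnn k); rewrite !mulSn; lia.
have := @leq_mul i.-1.+2 k b k ltac:(lia) (leqnn k); rewrite !mulSn; lia.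
Qed.

Ltac gen_tac z hm hb := split; [
  apply/permP => x; apply/val_inj; rewrite !permM !wblkE // !stpE ?wblkE //; try lia;
  rewrite !(@blk_lin _ _ z) //; have := ltn_ord x; move: hm hb; iflia2
| apply: inv_mul => x y hxy; rewrite !stpE ?wblkE //; try lia;
  rewrite !(@blk_lin _ _ z) //; have := ltn_ord x; have := ltn_ord y; move: hm hb; iflia2].

Lemma W_gen i b a : (0 < i)%N -> (i.+1 * k <= m)%N -> (b.+1 * k <= m)%N -> (0 < a < k)%N ->
  (W i * stp m (b * k + a) = stp m (sw i b * k + a) * W i)%g /\
  inv (W i * stp m (b * k + a))%g = (inv (W i) + inv (stp m (b * k + a)))%N.
Proof.
move=> hi hm hb ha.
have hm' := hm; move: hm'; rewrite mulSn mulpk //; set z := (i.-1 * k)%N => hm'.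
have hb' := hb; move: hb'; rewrite mulSn => hb'.
rewrite /sw; case: (eqVneq b i.-1) => [eb|n1].
  subst b; have hz : (i * k = z + k)%N by rewrite mulpk.
  rewrite hz; gen_tac z hm' hb'.
case: (eqVneq b i) => [eb|n2].
  subst b; have hz : (i * k = z + k)%N by rewrite mulpk.
  rewrite hz; gen_tac z hm' hb'.
have := sw_far hi n1 n2; rewrite -/z => fz.
gen_tac z hm' hb'.
Qed.

End Blocks.

Section Alg.
Variables (K : fieldType) (A : algType K) (q : K).
Local Open Scope ring_scope.

Lemma sigw_conj k (s1 s2 : nat -> A) (X : A) (w : {perm 'I_k}) :
  (forall a, (0 < a < k)%N -> X * s1 a = s2 a * X) -> X * sigw s1 w = sigw s2 w * X.
Proof.
move=> h; rewrite /sigw; case: pickP => [t _|_]; last by rewrite mul0r mulr0.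
elim: (tval t) => [|i t' IH]; first by rewrite !big_nil mulr1 mul1r.
rewrite !big_cons mulrA h; last by rewrite /letter; have := ltn_ord i; lia.
by rewrite -mulrA IH mulrA.
Qed.

Lemma qsym_conj k (s1 s2 : nat -> A) (X : A) :
  (forall a, (0 < a < k)%N -> X * s1 a = s2 a * X) -> X * qsym q s1 k = qsym q s2 k * X.
Proof.
move=> h; rewrite /qsym -scalerAr -scalerAl mulr_sumr mulr_suml; congr (_ *: _).
by apply: eq_bigr => w _; rewrite -scalerAr -scalerAl (sigw_conj _ h).
Qed.

Lemma prod_conj (r : seq nat) (F G : nat -> A) (X : A) :
  (forall b, b \in r -> X * F b = G b * X) -> X * \prod_(b <- r) F b = (\prod_(b <- r) G b) * X.
Proof.
elim: r => [|b r IH] h; first by rewrite !big_nil mulr1 mul1r.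
rewrite !big_cons mulrA h ?mem_head // -mulrA IH ?mulrA // => c hc.
by apply: h; rewrite in_cons hc orbT.
Qed.

Lemma swap_prod (n i : nat) (F : nat -> A) : (0 < i)%N -> (i < n)%N ->
  F i.-1 * F i = F i * F i.-1 ->
  \prod_(0 <= b < n) F (sw i b) = \prod_(0 <= b < n) F b.
Proof.
move=> hi hin hc.
have e : forall G : nat -> A, \prod_(0 <= b < n) G b =
    (\prod_(0 <= b < i.-1) G b) * (G i.-1 * G i) * \prod_(i.+1 <= b < n) G b.
  move=> G; rewrite (@big_cat_nat _ _ _ i.-1 0 n) /=; try lia.
  rewrite (@big_cat_nat _ _ _ i.+1 i.-1 n) /=; try lia.
  have mid : \prod_(i.-1 <= b < i.+1) G b = G i.-1 * G i.
    case: i hi {hin hc} => // j _ /=.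
    by rewrite big_nat_recl // big_nat1.
  by rewrite mid !mulrA.
rewrite !e; congr (_ * _ * _).
- by apply: eq_big_nat => b hb; rewrite /sw; case: eqP; [lia|]; case: eqP => //; lia.
- by rewrite /sw eqxx; case: eqP; [lia|]; rewrite eqxx hc.
- by apply: eq_big_nat => b hb; rewrite /sw; case: eqP; [lia|]; case: eqP => //; lia.
Qed.

Lemma comm_Q3 (T1 T2 T3 Q : A) : T2 * Q = Q * T2 -> T3 * Q = Q * T3 ->
  T1 * Q * (T2 * Q) * (T3 * Q) = T1 * T2 * T3 * (Q * Q * Q).
Proof.
move=> h2 h3.
have e : forall X Y, Y * Q = Q * Y -> X * Q * Y = X * Y * Q.
  by move=> X Y h; rewrite -mulrA -h mulrA.
by rewrite !mulrA (e _ _ h2) (e _ _ h3) (e _ _ h3) ?mulrA.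
Qed.

Lemma comm_Q2 (T1 T2 Q : A) : T2 * Q = Q * T2 ->
  T1 * Q * (T2 * Q) = T1 * T2 * (Q * Q).
Proof. by move=> h2; rewrite !mulrA -(mulrA T1) -h2 !mulrA. Qed.

End Alg.


Theorem mainTheorem8 (R : realType) (A : algType (Cq R)) (s : nat -> A)
    (k n : nat) :
  (1 <= k)%N -> (2 <= n)%N -> hecke_rel (qq R) (k * n) s ->
  let P := Pkn (qq R) s k n in
  let Sig := fun i => (P * sigw s (wblk (k * n) k i) * P)%R in
  [/\ (forall i, (1 <= i <= n.-1)%N ->
         (sigw s (wblk (k * n) k i) * P = P * sigw s (wblk (k * n) k i))%R),
      (forall i, (1 <= i)%N -> (i <= n - 2)%N ->
         (Sig i * Sig i.+1 * Sig i = Sig i.+1 * Sig i * Sig i.+1)%R)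
    & (forall i j, (1 <= i <= n.-1)%N -> (1 <= j <= n.-1)%N ->
         (i.+1 < j)%N || (j.+1 < i)%N ->
         (Sig i * Sig j = Sig j * Sig i)%R)].
Proof.
move=> hk hn [Hb Hc Hq] P Sig.
have Hb' : forall i, (0 < i)%N -> (i.+1 < k * n)%N ->
    (s i * s i.+1 * s i = s i.+1 * s i * s i.+1)%R.
  by move=> i h1 h2; apply: Hb => //; lia.
have Hc' : forall i j, (0 < i < k * n)%N -> (0 < j < k * n)%N -> (i.+1 < j)%N || (j.+1 < i)%N ->
    (s i * s j = s j * s i)%R.
  by move=> i j h1 h2 h3; apply: Hc => //; lia.
have bound : forall i, (i < n)%N -> (i.+1 * k <= k * n)%N.
  by move=> i hi; rewrite mulnC leq_mul2l hi orbT.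
pose T i := sigw s (wblk (k * n) k i).
have comm_gen : forall i b a, (0 < i)%N -> (i < n)%N -> (b < n)%N -> (0 < a < k)%N ->
    (T i * s (b * k + a) = s (sw i b * k + a) * T i)%R.
  move=> i b a hi hin hb ha.
  have [E I] := W_gen hi (bound _ hin) (bound _ hb) ha.
  have hsw : (sw i b < n)%N by rewrite /sw; case: ifP; [lia|]; case: ifP; lia.
  have hc : (0 < b * k + a < k * n)%N by have := bound _ hb; rewrite mulSn; lia.
  have hc' : (0 < sw i b * k + a < k * n)%N by have := bound _ hsw; rewrite mulSn; lia.
  rewrite /T -(sigw_stp Hb' Hc' hc) -(sigw_mul Hb' Hc') // E (sigw_mul Hb' Hc') ?(sigw_stp Hb' Hc') //.
  by rewrite -E I !inv_stp // addnC.
have claim1 : forall i, (0 < i)%N -> (i < n)%N -> (T i * P = P * T i)%R.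
  move=> i hi hin.
  rewrite /P /Pkn -(big_mkord xpredT (fun b => qsym (qq R) (fun a => s (b * k + a)) k)).
  rewrite (@prod_conj _ _ _ _ (fun b => qsym (qq R) (fun a => s (sw i b * k + a)) k)).
    congr (_ * _)%R; apply: (swap_prod (F := fun b => qsym (qq R) (fun a => s (b * k + a)) k)) => //=.
    apply: qsym_conj => a ha; apply: esym; apply: qsym_conj => a' ha'.
    apply: Hc'; have := bound _ hin; rewrite mulSn (mulpk k hi); set z := (i.-1 * k)%N; lia.
  move=> b; rewrite mem_iota add0n => /andP [_ hb]; apply: qsym_conj => a ha; apply: comm_gen => //; lia.
have QT : forall i, (0 < i)%N -> (i < n)%N -> (T i * (P * P) = (P * P) * T i)%R.
  by move=> i hi hin; rewrite mulrA claim1 // -!mulrA claim1.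
have SigE : forall i, (0 < i)%N -> (i < n)%N -> Sig i = (T i * (P * P))%R.
  by move=> i hi hin; rewrite /Sig -/(T i) -claim1 // mulrA.
split.
- by move=> i /andP [h1 h2]; apply: claim1; lia.
- move=> i h1 h2.
  rewrite !SigE; try lia.
  rewrite (@comm_Q3 _ _ _ _ _ (P * P)%R); [|apply: QT; lia|apply: QT; lia].
  rewrite (@comm_Q3 _ _ _ _ _ (P * P)%R); [|apply: QT; lia|apply: QT; lia].
  have hm : (i.+2 * k <= k * n)%N by apply: bound; lia.
  have [c1 [c2 [c3 c4]]] := W_inv_crit1 h1 hm.
  rewrite /T -!(sigw_mul Hb' Hc') //.
  by rewrite W_braid.
- move=> i j /andP [hi1 hi2] /andP [hj1 hj2] far.
  rewrite !SigE; try lia.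
  rewrite (@comm_Q2 _ _ _ _ (P * P)%R); [|apply: QT; lia].
  rewrite (@comm_Q2 _ _ _ _ (P * P)%R); [|apply: QT; lia].
  have [E I] := W_far hi1 hj1 (bound i ltac:(lia)) (bound j ltac:(lia)) far.
  rewrite /T -!(sigw_mul Hb' Hc') // ?E //.
  by rewrite -E I addnC.
Qed.
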